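(* Let $b,c\in\mathbb{Z}$ and $d=b^2-4c$. For every positive integer $n$, $$nT_n(b,c)T_{n-1}(b,c)=b\sum_{j=0}^{n-1}(n-j)\binom{n+j}{2j}\binom{2j}{j}^2c^jd^{n-1-j}.$$
   Context: $T_n(b,c)$ is the coefficient of $x^n$ in $(x^2+bx+c)^n$, i.e. $T_n(b,c)=\sum_{k=0}^{\lfloor n/2\rfloor}\binom{n}{2k}\binom{2k}{k}b^{n-2k}c^k$. *)

(* Defs.v *)
From mathcomp Require Import all_boot all_order all_algebra.
Set Implicit Arguments. Unset Strict Implicit. Unset Printing Implicit Defensive.
Import Order.TTheory GRing.Theory Num.Theory.
Local Open Scope ring_scope.

(* T_n(b,c) = sum_{k=0}^{floor(n/2)} C(n,2k) C(2k,k) b^(n-2k) c^k,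
   the coefficient of x^n in (x^2+bx+c)^n. *)
Definition T (n : nat) (b c : int) : int :=
  \sum_(0 <= k < (n./2).+1) ('C(n, k.*2) * 'C(k.*2, k))%:R * b ^+ (n - k.*2) * c ^+ k.

(* Main.v *)
Require Import Defs.
From mathcomp Require Import all_boot all_order all_algebra.
From mathcomp Require Import ring zify lra.
Import Order.TTheory GRing.Theory Num.Theory.
Local Open Scope ring_scope.


Lemma from_eq {R : comRingType} {L Rr L' R' : R} : L' = R' -> L - Rr = L' - R' -> L = Rr.
Proof. by move=> h1 h2; apply/eqP; rewrite -subr_eq0 h2 h1 subrr. Qed.

Lemma binD1 M m : (M.+1 * 'C(M, m) + m * 'C(M.+1, m) = M.+1 * 'C(M.+1, m))%N.
Proof.
have := mul_bin_down M.+1 m; rewrite /= => ->.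
case: (leqP m M.+1) => h; first by rewrite -mulnDl subnK.
by rewrite !bin_small ?muln0 // ltnW.
Qed.

Lemma cbin k : (k.+1 * 'C(k.*2.+2, k.+1) = 2 * k.*2.+1 * 'C(k.*2, k))%N.
Proof.
have h1 := mul_bin_diag (k.*2.+2) k.
have h2 := mul_bin_diag (k.*2.+1) k.
have e : (k.*2.+1 - k.+1 = k)%N by rewrite -addnn subSS addnK.
have h3 : 'C(k.*2.+1, k) = 'C(k.*2.+1, k.+1).
  by have := @bin_sub (k.*2.+1) k.+1; rewrite e => ->//; rewrite ltnS -addnn leq_addl.
simpl in h1, h2.
apply/eqP; rewrite -(eqn_pmul2l (ltn0Sn k)); apply/eqP.
rewrite -h1 h3 mulnCA -h2.
move: ('C(k.*2, k)) => C. rewrite -mul2n. ring.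
Qed.

Definition tt n k : nat := ('C(n, k.*2) * 'C(k.*2, k))%N.
Definition aa n j : nat := ('C(n + j, j.*2) * 'C(j.*2, j) ^ 2)%N.

Lemma tt0 n k : (n < k.*2)%N -> tt n k = 0%N.
Proof. by move=> h; rewrite /tt bin_small. Qed.

Lemma aa0 n j : (n < j)%N -> aa n j = 0%N.
Proof. by move=> h; rewrite /aa bin_small // -addnn ltn_add2r. Qed.

Lemma T1 n k : (n.+2 * tt n.+1 k + k.*2 * tt n.+2 k = n.+2 * tt n.+2 k)%N.
Proof. by rewrite /tt !mulnA -mulnDl binD1. Qed.

Lemma T2 n k : (n.+1 * tt n k + k.*2 * tt n.+1 k = n.+1 * tt n.+1 k)%N.
Proof. by rewrite /tt !mulnA -mulnDl binD1. Qed.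

Lemma T3 n k : (k.+1 ^ 2 * tt n.+2 k.+1 = n.+2 * n.+1 * tt n k)%N.
Proof.
rewrite /tt doubleS.
have d1 := mul_bin_diag n.+2 (k.*2.+1).
have d2 := mul_bin_diag n.+1 (k.*2).
have c := cbin k. simpl in d1, d2.
move: d1 d2 c; move: ('C(n.+2, k.*2.+2)) ('C(n.+1, k.*2.+1)) ('C(n, k.*2))
   ('C(k.*2.+2, k.+1)) ('C(k.*2, k)) => X P Z Y W d1 d2 c.
transitivity ((k.*2.+2 * X) * (k.*2.+1 * W))%N.
  transitivity (k.+1 * X * (k.+1 * Y))%N; first by ring.
  by rewrite c -mul2n; ring.
rewrite -d1.
transitivity (n.+2 * (k.*2.+1 * P) * W)%N; first by ring.
by rewrite -d2; ring.
Qed.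

Lemma RA n j : ((n.+1 + j) * aa n j + j.*2 * aa n.+1 j = (n.+1 + j) * aa n.+1 j)%N.
Proof. rewrite /aa; move: ('C(j.*2, j) ^ 2)%N => W; by rewrite !mulnA -mulnDl addSn binD1. Qed.

Lemma RC n i : ((i.+1) ^ 3 * aa n.+1 i.+1 = 2 * i.*2.+1 * (n + i).+2 * (n + i).+1 * aa n i)%N.
Proof.
rewrite /aa doubleS addSn addnS.
have d1 := mul_bin_diag (n + i).+2 (i.*2.+1).
have d2 := mul_bin_diag (n + i).+1 (i.*2).
have c := cbin i. simpl in d1, d2.
move: d1 d2 c; move: ('C((n + i).+2, i.*2.+2)) ('C((n + i).+1, i.*2.+1)) ('C(n + i, i.*2))
   ('C(i.*2.+2, i.+1)) ('C(i.*2, i)) => X P Z Y W d1 d2 c.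
transitivity (2 * i.*2.+1 * W ^ 2 * (i.*2.+1) * (i.*2.+2 * X))%N.
  transitivity (i.+1 * X * (i.+1 * Y) ^ 2)%N; first by ring.
  by rewrite c -mul2n; ring.
rewrite -d1.
transitivity (2 * i.*2.+1 * W ^ 2 * (n + i).+2 * (i.*2.+1 * P))%N; first by ring.
by rewrite -d2; ring.
Qed.


Lemma solve1 {F : fieldType} {p x y z : F} : p != 0 -> p * x + y = z -> x = (z - y) / p.
Proof. by move=> hp <-; rewrite addrK mulrC mulKf. Qed.
Lemma solve0 {F : fieldType} {p x z : F} : p != 0 -> p * x = z -> x = z / p.
Proof. by move=> hp <-; rewrite mulrC mulKf. Qed.

Lemma natrQ {m n : nat} : m = n -> (m%:R : rat) = n%:R.
Proof. by move->. Qed.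

Lemma nz (n : nat) : (n.+1)%:R != 0 :> rat.
Proof. by rewrite pnatr_eq0. Qed.

Lemma PTn n i : (n.+2 * tt n.+2 i.+1 + n.+1 * tt n i.+1 = (2 * n.+1 + 1) * tt n.+1 i.+1 + 4 * n.+1 * tt n i)%N.
Proof.
have r1 := T1 n i.+1. have r2 := T2 n i.+1. have r3 := T3 n i.
move: r1 r2 r3; rewrite -!mul2n.
move: (tt n.+2 i.+1) (tt n.+1 i.+1) (tt n i.+1) (tt n i) => A t1 t0 tc r1 r2 r3.
suff: (n.+2%:R * A%:R + n.+1%:R * t0%:R = (2 * n.+1 + 1)%:R * t1%:R + (4 * n.+1)%:R * tc%:R :> rat).
  by rewrite -!natrM -!natrD => /eqP; rewrite eqr_nat => /eqP.
have q1 : (n.+2%:R * t1%:R + (2 * i.+1)%:R * A%:R = n.+2%:R * A%:R :> rat).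
  by rewrite -!natrM -natrD r1.
have q2 : (n.+1%:R * t0%:R + (2 * i.+1)%:R * t1%:R = n.+1%:R * t1%:R :> rat).
  by rewrite -!natrM -natrD r2.
have q3 : (n.+2%:R * n.+1%:R * tc%:R = (i.+1 ^ 2)%:R * A%:R :> rat).
  by rewrite -!natrM r3.
have e1 := solve1 (nz _) q1.
have e0 := solve1 (nz _) q2.
have ec := solve0 (mulf_neq0 (nz _) (nz _)) q3.
rewrite e0 e1 ec. field.
by rewrite nat1r -(natrD _ 2) !pnatr_eq0.
Qed.

Lemma I2n n j : (j <= n)%N -> ((2*n+1) * aa n j = (n - j) * aa n j + (n.+1 - j) * aa n.+1 j)%N.
Proof.
move=> h; have r := RA n j; move: r; move: (aa n j) (aa n.+1 j) => B A r.
have [m em] : exists m, n = (j + m)%N by exists (n - j)%N; rewrite subnKC.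
subst n; rewrite -mul2n in r.
rewrite addKn subSn ?leq_addr // addKn.
nia.
Qed.

Lemma I3n n j : (n.+1 ^ 2 * aa n.+1 j = (2*n+1) * ((2*j+1) * aa n j) + 4 * (2*n+1) * (if j is i.+1 then (2 * i+1) * aa n i else 0) + n^2 * aa n.-1 j)%N.
Proof.
case: j => [|i].
  by rewrite /aa /= !addn0 !bin0 !muln0 !muln1 !addn0; ring.
case: n => [|m].
  case: i => [|i]; first by [].
  by rewrite (aa0 1 i.+2) // (aa0 0 i.+2) // (aa0 0 i.+1) // !muln0.
have r1 := RA m.+1 i.+1. have r2 := RA m i.+1. have r3 := RC m.+1 i.
move: r1 r2 r3; rewrite -!mul2n /=.
move: (aa m.+2 i.+1) (aa m.+1 i.+1) (aa m i.+1) (aa m.+1 i) => A B D Cc r1 r2 r3.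
suff: ((m.+2 ^ 2)%:R * A%:R = ((2 * m.+1+1) * (2 * i.+1+1))%:R * B%:R + (4 * (2 * m.+1+1) * (2 * i+1))%:R * Cc%:R + (m.+1 ^ 2)%:R * D%:R :> rat).
  by rewrite -!natrM -!natrD => /eqP; rewrite eqr_nat => /eqP ->; ring.
have q1 : ((m.+2 + i.+1)%:R * B%:R + (2 * i.+1)%:R * A%:R = (m.+2 + i.+1)%:R * A%:R :> rat).
  by rewrite -!natrM -natrD r1.
have q2 : ((m.+1 + i.+1)%:R * D%:R + (2 * i.+1)%:R * B%:R = (m.+1 + i.+1)%:R * B%:R :> rat).
  by rewrite -!natrM -natrD r2.
have q3 : ((2 * (2 * i).+1 * (m.+1 + i).+2 * (m.+1 + i).+1)%:R * Cc%:R = (i.+1 ^ 3)%:R * A%:R :> rat).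
  by rewrite -!natrM r3.
have e1 := solve1 _ q1.
have e0 := solve1 _ q2.
have ec := solve0 _ q3.
rewrite ec; last by rewrite pnatr_eq0 !muln_eq0.
rewrite e0; last by rewrite pnatr_eq0 addnS.
rewrite e1; last by rewrite pnatr_eq0 addnS.
field.
by apply/and3P; split; apply: lt0r_neq0; have := ler0n rat m; have := ler0n rat i; lra.
Qed.


Definition G (b c : int) n (g : nat -> int) :=
  \sum_(0 <= k < n.+1) g k * b ^+ (n - k.*2) * c ^+ k.
Definition H (c d : int) n (f : nat -> int) :=
  \sum_(0 <= j < n.+1) f j * c ^+ j * d ^+ (n - j).
Definition sh (f : nat -> int) j := if j is j'.+1 then f j' else 0.

Lemma G_ext b c n f g : (forall k, f k = g k) -> G b c n f = G b c n g.
Proof. by move=> h; apply: eq_bigr => k _; rewrite h. Qed.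

Lemma G_scale b c n x f : x * G b c n f = G b c n (fun k => x * f k).
Proof. by rewrite /G big_distrr; apply: eq_bigr => k _ /=; ring. Qed.

Lemma G_lin b c n x y z f g h :
  x * G b c n f + y * G b c n g + z * G b c n h
  = G b c n (fun k => x * f k + y * g k + z * h k).
Proof. by rewrite /G !big_distrr -!big_split; apply: eq_bigr => k _ /=; ring. Qed.

Lemma Gb b c n g : (forall k, (n < k.*2)%N -> g k = 0) -> b * G b c n g = G b c n.+1 g.
Proof.
move=> hg; rewrite /G [in RHS]big_nat_recr //= (hg n.+1) ?mul0r ?addr0; last first.
  by rewrite -mul2n; lia.
rewrite big_distrr; apply: eq_bigr => k _ /=.
case: (leqP (k.*2) n) => h; first by rewrite subSn // exprS; ring.
by rewrite hg // !mul0r mulr0.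
Qed.

Lemma Gc b c n g : (forall k, (n < k.*2)%N -> g k = 0) -> c * G b c n g = G b c n.+2 (sh g).
Proof.
move=> hg; rewrite /G [in RHS]big_nat_recl // /= !mul0r add0r.
rewrite [in RHS]big_nat_recr //= (hg n.+1) ?mul0r ?addr0; last first.
  by rewrite -mul2n; lia.
rewrite big_distrr; apply: eq_bigr => k _ /=.
by rewrite doubleS !subSS exprS; ring.
Qed.

Lemma H_ext c d n f g : (forall j, (j <= n)%N -> f j = g j) -> H c d n f = H c d n g.
Proof. by move=> h; apply: eq_big_nat => j /andP[_ hj]; rewrite h. Qed.

Lemma H_scale c d n x f : x * H c d n f = H c d n (fun k => x * f k).
Proof. by rewrite /H big_distrr; apply: eq_bigr => k _ /=; ring. Qed.

Lemma H_lin c d n x y z f g h :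
  x * H c d n f + y * H c d n g + z * H c d n h
  = H c d n (fun k => x * f k + y * g k + z * h k).
Proof. by rewrite /H !big_distrr -!big_split; apply: eq_bigr => k _ /=; ring. Qed.

Lemma Hd c d n f : f n.+1 = 0 -> d * H c d n f = H c d n.+1 f.
Proof.
move=> h; rewrite /H [in RHS]big_nat_recr //= h !mul0r addr0 big_distrr.
by apply: eq_big_nat => j /andP[_ hj] /=; rewrite subSn // exprS; ring.
Qed.

Lemma Hc c d n f : c * H c d n f = H c d n.+1 (sh f).
Proof.
rewrite /H [in RHS]big_nat_recl //= !mul0r add0r big_distrr.
by apply: eq_bigr => j _ /=; rewrite subSS exprS; ring.
Qed.

Lemma T_G b c n : T n b c = G b c n (fun k => (tt n k)%:R).
Proof.
rewrite /T /G [in RHS](big_cat_nat _ (n := n./2.+1)) //=; last first.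
  by rewrite ltnS leq_half_double -mul2n; lia.
rewrite [X in _ = _ + X]big1_seq ?addr0 //.
move=> k /andP[_]; rewrite mem_index_iota => /andP[h1 h2].
by rewrite tt0 ?mul0r // -ltn_half_double.
Qed.


Lemma natrI {m n : nat} : m = n -> (m%:R : int) = n%:R.
Proof. by move->. Qed.

Lemma Trec b c n : (n.+2)%:R * T n.+2 b c =
  (2 * n.+1 + 1)%:R * b * T n.+1 b c - (n.+1)%:R * (b ^+ 2 - 4 * c) * T n b c.
Proof.
rewrite !T_G.
pose t2 := (fun k => (tt n.+2 k)%:R : int).
pose t1 := (fun k => (tt n.+1 k)%:R : int).
pose t0 := (fun k => (tt n k)%:R : int).
rewrite -/t2 -/t1 -/t0.
have ok m k : (m < k.*2)%N -> (tt m k)%:R = 0 :> int by move=> h; rewrite tt0.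
have okS m k : (m.+1 < k.*2)%N -> (tt m k)%:R = 0 :> int by move=> h; rewrite tt0 // ltnW.
have e1 : b * G b c n.+1 t1 = G b c n.+2 t1 := Gb b c n.+1 t1 (ok n.+1).
have e2 : (b ^+ 2 - 4 * c) * G b c n t0 = G b c n.+2 t0 - 4 * G b c n.+2 (sh t0).
  by rewrite mulrBl expr2 -mulrA (Gb b c n t0 (ok n)) (Gb b c n.+1 t0 (okS n)) -mulrA (Gc b c n t0 (ok n)).
transitivity ((2 * n.+1 + 1)%:R * (b * G b c n.+1 t1) + (- n.+1%:R) * ((b ^+ 2 - 4 * c) * G b c n t0)); last by ring.
rewrite e1 e2.
transitivity ((2 * n.+1 + 1)%:R * G b c n.+2 t1 + (- n.+1%:R) * G b c n.+2 t0 + (4 * n.+1%:R) * G b c n.+2 (sh t0)); last by ring.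
rewrite G_lin G_scale; apply: G_ext => k.
rewrite /t2 /t1 /t0; case: k => [|i] /=.
  by rewrite /tt !bin0 !muln1; ring.
have h := natrI (PTn n i).
by apply: (from_eq h); ring.
Qed.

Definition U (b c : int) n : int := H c (b ^+ 2 - 4 * c) n (fun j => (aa n j)%:R).
Definition SS (b c : int) n : int := \sum_(0 <= j < n)
   ((n - j) * 'C(n + j, j.*2) * 'C(j.*2, j) ^ 2)%:R * c ^+ j * (b ^+ 2 - 4 * c) ^+ (n.-1 - j).
Definition sf n j : int := ((n - j) * 'C(n + j, j.*2) * 'C(j.*2, j) ^ 2)%:R.

Lemma S_H b c m : SS b c m.+1 = H c (b ^+ 2 - 4 * c) m (sf m.+1).
Proof. by []. Qed.

Lemma dS b c n : (b ^+ 2 - 4 * c) * SS b c n = H c (b ^+ 2 - 4 * c) n (sf n).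
Proof.
case: n => [|m].
  by rewrite /SS big_geq // mulr0 /H big_nat1 /sf subnn !mul0n !mul0r.
by rewrite S_H Hd // /sf subnn !mul0n.
Qed.

Lemma aa_sf n j : sf n j = ((n - j) * aa n j)%:R.
Proof. by rewrite /sf /aa mulnA. Qed.

Lemma T_0 b c : T 0 b c = 1.
Proof. by rewrite /T big_nat1 /= mulr1 mulr1. Qed.

Lemma T_1 b c : T 1 b c = b.
Proof. by rewrite /T big_nat1 /= mulr1 mul1r. Qed.

Lemma Trec' b c n : (n.+1)%:R * T n.+1 b c =
  (2 * n + 1)%:R * b * T n b c - n%:R * (b ^+ 2 - 4 * c) * T n.-1 b c.
Proof.
case: n => [|m]; last exact: Trec.
by rewrite T_1 T_0 !mul0r subr0 !mul1r mulr1.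
Qed.

Lemma VU b c n : n%:R * ((b ^+ 2 - 4 * c) ^+ 2 * U b c n.-1) =
  n%:R * H c (b ^+ 2 - 4 * c) n.+1 (fun j => (aa n.-1 j)%:R).
Proof.
case: n => [|m]; first by rewrite !mul0r.
rewrite /U expr2 -mulrA Hd; last by rewrite aa0.
by rewrite Hd // aa0.
Qed.

Lemma wE n j : (2 * n + 1)%:R * (aa n j)%:R + -2 * sf n j + 0 * (aa n j)%:R
   = ((2 * j + 1) * aa n j)%:R :> int.
Proof.
rewrite aa_sf; case: (leqP j n) => h.
  by rewrite (natrM _ (n - j)) natrB //; ring.
by rewrite aa0 //; ring.
Qed.

Lemma claim b c n : T n b c ^+ 2 = U b c n /\ n%:R * T n b c * T n.-1 b c = b * SS b c n
   /\ T n.-1 b c ^+ 2 = U b c n.-1.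
Proof.
elim: n => [|n [p [q p']]].
  have u0 : U b c 0 = 1 by rewrite /U /H big_nat1 /aa /= !mulr1.
  by rewrite /= T_0 expr1n u0 /SS big_geq // mulr0 !mul0r.
have tr := Trec' b c n.
have q1 : n.+1%:R * T n.+1 b c * T n b c = b * SS b c n.+1.
  rewrite tr.
  transitivity ((2 * n + 1)%:R * b * T n b c ^+ 2 - (b ^+ 2 - 4 * c) * (n%:R * T n b c * T n.-1 b c)); first by ring.
  rewrite p q.
  transitivity (b * ((2 * n + 1)%:R * U b c n + (-1) * ((b ^+ 2 - 4 * c) * SS b c n) + 0 * U b c n)); first by ring.
  rewrite dS /U H_lin S_H; congr (b * _); apply: H_ext => j hj.
  rewrite !aa_sf; have h := natrI (I2n n j hj).
  by apply: (from_eq h); ring.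
split; last by split.
apply: (@mulfI _ (n.+1%:R ^+ 2)); first by rewrite expf_neq0 // pnatr_eq0.
transitivity ((n.+1%:R * T n.+1 b c) ^+ 2); first by ring.
rewrite tr.
transitivity ((2 * n + 1)%:R ^+ 2 * b ^+ 2 * T n b c ^+ 2
   - 2 * (2 * n + 1)%:R * b * (b ^+ 2 - 4 * c) * (n%:R * T n b c * T n.-1 b c)
   + n%:R ^+ 2 * (b ^+ 2 - 4 * c) ^+ 2 * T n.-1 b c ^+ 2); first by ring.
rewrite p q p'.
transitivity ((2 * n + 1)%:R * ((b ^+ 2 - 4 * c) * ((2 * n + 1)%:R * U b c n + (-2) * ((b ^+ 2 - 4 * c) * SS b c n) + 0 * U b c n))
  + 4 * (2 * n + 1)%:R * (c * ((2 * n + 1)%:R * U b c n + (-2) * ((b ^+ 2 - 4 * c) * SS b c n) + 0 * U b c n))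
  + n%:R * (n%:R * ((b ^+ 2 - 4 * c) ^+ 2 * U b c n.-1))); first by ring.
rewrite VU dS /U !H_lin Hc Hd; last first.
  by rewrite aa_sf aa0 // !muln0 mulr0 mul0r !addr0.
rewrite mulrA H_lin H_scale; apply: H_ext => j _.
rewrite wE; case: j => [|i] /=.
  move: (I3n n 0) => /= /natrI h.
  by apply: (from_eq (esym h)); ring.
rewrite (wE n i).
move: (I3n n i.+1) => /= /natrI h.
by apply: (from_eq (esym h)); ring.
Qed.

Theorem lemma4p1 (b c : int) (n : nat) (hn : (0 < n)%N) :
  let d := b ^+ 2 - 4 * c in
  n%:R * T n b c * T n.-1 b c =
  b * \sum_(0 <= j < n)
        ((n - j) * 'C(n + j, j.*2) * 'C(j.*2, j) ^ 2)%:R * c ^+ j * d ^+ (n.-1 - j).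
Proof.
move=> d.
have [_ [q _]] := claim b c n.
exact: q.
Qed.
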